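(* Let $\mathcal{L}$ be the set of the $81$ lines in $\mathbb{P}^2_{\mathbb{C}}$ that contain at least three sextactic points of the Fermat cubic (see context). For each $L\in\mathcal{L}$ choose a linear form $\ell_L\in\mathbb{C}[x,y,z]$ defining $L$. Then there is a nonzero constant $c\in\mathbb{C}$ such that $$c\prod_{L\in\mathcal{L}}\ell_L\in\mathbb{Z}[x,y,z].$$ That is, the product of the equations of the $81$ lines is defined over $\mathbb{Z}$.
   Context: $F\subset\mathbb{P}^2_{\mathbb{C}}$ is the Fermat cubic $x^3+y^3+z^3=0$. The set of its sextactic points is $$S=\{[x:y:z]\in\mathbb{P}^2: x^3+y^3+z^3=0,\ (x^3-y^3)(y^3-z^3)(z^3-x^3)=0\}.$$ These are the $27$ points of $F$ at which the osculating conic has local contact order at least $6$ with $F$. There are exactly $81$ lines containing at least (in fact exactly) three points of $S$. *)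

(* Defs.v *)
From HB Require Import structures.
From mathcomp Require Import all_boot all_order all_algebra.
From mathcomp Require Import mpoly.
Set Implicit Arguments. Unset Strict Implicit. Unset Printing Implicit Defensive.
Import Order.TTheory GRing.Theory Num.Theory.
Local Open Scope ring_scope.

(* Homogeneous coordinates (x,y,z) of a point of P^2, resp. coefficients
   (a,b,c) of a linear form a x + b y + c z. *)
Definition vec3 (C : Type) := (C * C * C)%type.

Section Fermat.
Variable C : numClosedFieldType.

Definition nonzero3 (v : vec3 C) : Prop := v <> (0, 0, 0).

Definition proj_eq (v w : vec3 C) : Prop :=
  exists k : C, k != 0 /\ v = (k * w.1.1, k * w.1.2, k * w.2).

Definition on_fermat (p : vec3 C) : Prop :=
  let: (x, y, z) := p in x ^+ 3 + y ^+ 3 + z ^+ 3 = 0.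

Definition sextactic (p : vec3 C) : Prop :=
  nonzero3 p /\ on_fermat p /\
  let: (x, y, z) := p in
  (x ^+ 3 - y ^+ 3) * (y ^+ 3 - z ^+ 3) * (z ^+ 3 - x ^+ 3) = 0.

Definition on_line (l p : vec3 C) : Prop :=
  l.1.1 * p.1.1 + l.1.2 * p.1.2 + l.2 * p.2 = 0.

Definition sextactic_line (l : vec3 C) : Prop :=
  nonzero3 l /\
  exists p1 p2 p3 : vec3 C,
    [/\ sextactic p1, sextactic p2 & sextactic p3] /\
    [/\ ~ proj_eq p1 p2, ~ proj_eq p1 p3 & ~ proj_eq p2 p3] /\
    [/\ on_line l p1, on_line l p2 & on_line l p3].

Definition linform (l : vec3 C) : {mpoly C[3]} :=
  l.1.1 *: 'X_(@Ordinal 3 0 isT) + l.1.2 *: 'X_(@Ordinal 3 1 isT)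
  + l.2 *: 'X_(@Ordinal 3 2 isT).

Definition int_mpoly (p : {mpoly C[3]}) : Prop :=
  forall m : 'X_{1..3}, exists z : int, p@_m = z%:~R.

End Fermat.

(* Main.v *)
Require Import Defs.
From Stdlib Require Import ZArith Lia.
From HB Require Import structures.
From mathcomp Require Import all_boot all_order all_algebra.
From mathcomp Require Import mpoly.
From mathcomp Require Import zify ssrZ ring.
Set Implicit Arguments. Unset Strict Implicit. Unset Printing Implicit Defensive.
Import Order.TTheory GRing.Theory Num.Theory.

Module M_K.

(* concrete elements of Z[w,r], w^2+w+1=0, r^3=-2 *)
Local Open Scope Z_scope.
Record KK := mkK { k0 : Z; k1 : Z; k2 : Z; k3 : Z; k4 : Z; k5 : Z }.
(* value: (k0 + k1 r + k2 r^2) + w (k3 + k4 r + k5 r^2) *)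
Definition Kz (a : Z) := mkK a 0 0 0 0 0.
Definition K0 := Kz 0. Definition K1 := Kz 1.
Definition Kw := mkK 0 0 0 1 0 0.
Definition Kr := mkK 0 1 0 0 0 0.
Definition addK x y := mkK (k0 x + k0 y) (k1 x + k1 y) (k2 x + k2 y)
  (k3 x + k3 y) (k4 x + k4 y) (k5 x + k5 y).
Definition oppK x := mkK (- k0 x) (- k1 x) (- k2 x) (- k3 x) (- k4 x) (- k5 x).
Definition subK x y := addK x (oppK y).
(* product of a0+a1r+a2r^2 and b0+b1r+b2r^2 mod r^3+2 *)
Definition rm0 (a0 a1 a2 b0 b1 b2 : Z) : Z := a0*b0 - 2*(a1*b2 + a2*b1).
Definition rm1 (a0 a1 a2 b0 b1 b2 : Z) : Z := a0*b1 + a1*b0 - 2*a2*b2.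
Definition rm2 (a0 a1 a2 b0 b1 b2 : Z) : Z := a0*b2 + a1*b1 + a2*b0.
Arguments rm0 : simpl never. Arguments rm1 : simpl never. Arguments rm2 : simpl never.
Definition mulK x y :=
  let a0 := k0 x in let a1 := k1 x in let a2 := k2 x in
  let a3 := k3 x in let a4 := k4 x in let a5 := k5 x in
  let b0 := k0 y in let b1 := k1 y in let b2 := k2 y in
  let b3 := k3 y in let b4 := k4 y in let b5 := k5 y in
  let q0 := rm0 a3 a4 a5 b3 b4 b5 in
  let q1 := rm1 a3 a4 a5 b3 b4 b5 in
  let q2 := rm2 a3 a4 a5 b3 b4 b5 in
  mkK (rm0 a0 a1 a2 b0 b1 b2 - q0) (rm1 a0 a1 a2 b0 b1 b2 - q1) (rm2 a0 a1 a2 b0 b1 b2 - q2)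
    (rm0 a0 a1 a2 b3 b4 b5 + rm0 a3 a4 a5 b0 b1 b2 - q0)
    (rm1 a0 a1 a2 b3 b4 b5 + rm1 a3 a4 a5 b0 b1 b2 - q1)
    (rm2 a0 a1 a2 b3 b4 b5 + rm2 a3 a4 a5 b0 b1 b2 - q2).
Definition eqK x y := [&& Z.eqb (k0 x) (k0 y), Z.eqb (k1 x) (k1 y), Z.eqb (k2 x) (k2 y),
  Z.eqb (k3 x) (k3 y), Z.eqb (k4 x) (k4 y) & Z.eqb (k5 x) (k5 y)].
Definition isK0 x := eqK x K0.

Local Close Scope Z_scope.
Lemma eqKP x y : eqK x y -> x = y.
Proof.
case: x y => ? ? ? ? ? ? [] ? ? ? ? ? ?; rewrite /eqK /=.
by move=> /andP[/Z.eqb_eq-> /andP[/Z.eqb_eq-> /andP[/Z.eqb_eq-> /andP[/Z.eqb_eq-> /andP[/Z.eqb_eq-> /Z.eqb_eq->]]]]].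
Qed.

Local Open Scope ring_scope.

Section Eval.
Variable C : numClosedFieldType.

Definition zC (z : Z) : C := (int_of_Z z)%:~R.

Lemma int_of_Z_add a b : int_of_Z (a + b) = int_of_Z a + int_of_Z b.
Proof. apply: (can_inj Z_of_intK); rewrite int_of_ZK; lia. Qed.
Lemma int_of_Z_mul a b : int_of_Z (a * b) = int_of_Z a * int_of_Z b.
Proof. apply: (can_inj Z_of_intK); rewrite int_of_ZK; lia. Qed.
Lemma int_of_Z_opp a : int_of_Z (- a) = - int_of_Z a.
Proof. apply: (can_inj Z_of_intK); rewrite int_of_ZK; lia. Qed.

Lemma zCD a b : zC (a + b) = zC a + zC b.
Proof. by rewrite /zC int_of_Z_add intrD. Qed.
Lemma zCM a b : zC (a * b) = zC a * zC b.
Proof. by rewrite /zC int_of_Z_mul intrM. Qed.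
Lemma zCN a : zC (- a) = - zC a.
Proof. by rewrite /zC int_of_Z_opp mulrNz. Qed.
Lemma zCB a b : zC (a - b) = zC a - zC b.
Proof. by rewrite zCD zCN. Qed.
Lemma zC0 : zC 0 = 0. Proof. by []. Qed.
Lemma zC1 : zC 1 = 1. Proof. by []. Qed.
Lemma zC2 : zC 2 = 2. Proof. by []. Qed.
Lemma zC_eq0 a : zC a = 0 -> a = Z0.
Proof.
move/eqP; rewrite /zC intr_eq0 => /eqP h.
by rewrite -(int_of_ZK a) h.
Qed.

End Eval.

End M_K.
Import M_K.

Module M_E.
Local Open Scope ring_scope.

Section Eval2.
Variable C : numClosedFieldType.

Definition wC : C := (sqrtC (-3) - 1) / 2.
Definition rC : C := - (3.-root 2).

Lemma wC_eq : wC ^+ 2 + wC + 1 = 0.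
Proof.
rewrite /wC.
have h3 : sqrtC (-3 : C) ^+ 2 = -3 by rewrite sqrtCK.
have h2 : (2 : C) != 0 by rewrite pnatr_eq0.
set s := sqrtC _ in h3 *.
have -> : ((s - 1) / 2) ^+ 2 + (s - 1) / 2 + 1 = (s ^+ 2 + 3) / 4.
  by field.
by rewrite h3 addNr mul0r.
Qed.

Lemma rC_eq : rC ^+ 3 + 2 = 0.
Proof. rewrite /rC exprNn rootCK //; ring. Qed.

Lemma rC_real : rC \is Num.real.
Proof. by rewrite /rC rpredN ger0_real // rootC_ge0 // ler0n. Qed.

Definition rv (a0 a1 a2 : Z) : C := zC C a0 + zC C a1 * rC + zC C a2 * rC ^+ 2.

Lemma rmulE a0 a1 a2 b0 b1 b2 :
  rv (rm0 a0 a1 a2 b0 b1 b2) (rm1 a0 a1 a2 b0 b1 b2) (rm2 a0 a1 a2 b0 b1 b2)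
  = rv a0 a1 a2 * rv b0 b1 b2.
Proof.
rewrite /rm0 /rm1 /rm2 /rv !(zCD, zCM, zCN, zCB) zC2.
apply/eqP; rewrite -subr_eq0.
set A := zC C a0; set B := zC C a1; set D := zC C a2.
set E := zC C b0; set F := zC C b1; set G := zC C b2.
have -> : A * E - 2 * (B * G + D * F) + (A * F + B * E - 2 * D * G) * rC +
  (A * G + B * F + D * E) * rC ^+ 2 - (A + B * rC + D * rC ^+ 2) * (E + F * rC + G * rC ^+ 2)
  = - (rC ^+ 3 + 2) * (B * G + D * F + D * G * rC) by ring.
by rewrite rC_eq oppr0 mul0r.
Qed.

Definition eval (x : KK) : C :=
  rv (k0 x) (k1 x) (k2 x) + wC * rv (k3 x) (k4 x) (k5 x).

Lemma eval_add x y : eval (addK x y) = eval x + eval y.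
Proof. rewrite /eval /rv /= !zCD; ring. Qed.
Lemma eval_opp x : eval (oppK x) = - eval x.
Proof. rewrite /eval /rv /= !zCN; ring. Qed.
Lemma eval_sub x y : eval (subK x y) = eval x - eval y.
Proof. by rewrite /subK eval_add eval_opp. Qed.
Lemma eval_Kz a : eval (Kz a) = zC C a.
Proof. rewrite /eval /rv /= zC0; ring. Qed.
Lemma eval_K0 : eval K0 = 0. Proof. by rewrite eval_Kz. Qed.
Lemma eval_K1 : eval K1 = 1. Proof. by rewrite eval_Kz. Qed.
Lemma eval_Kw : eval Kw = wC. Proof. rewrite /eval /rv /= zC0 zC1; ring. Qed.
Lemma eval_Kr : eval Kr = rC. Proof. rewrite /eval /rv /= zC0 zC1; ring. Qed.

Lemma eval_mul x y : eval (mulK x y) = eval x * eval y.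
Proof.
rewrite /mulK /eval.
simpl.
have e1 : forall p0 p1 p2 q0 q1 q2, rv (p0 - q0) (p1 - q1) (p2 - q2) = rv p0 p1 p2 - rv q0 q1 q2.
  move=> *; rewrite /rv !zCB; ring.
have e2 : forall s0 s1 s2 t0 t1 t2 q0 q1 q2, rv (s0 + t0 - q0) (s1 + t1 - q1) (s2 + t2 - q2) =
   rv s0 s1 s2 + rv t0 t1 t2 - rv q0 q1 q2.
  move=> *; rewrite /rv !zCB !zCD; ring.
rewrite e1 e2 !rmulE.
set X0 := rv (k0 x) _ _; set X1 := rv (k3 x) _ _.
set Y0 := rv (k0 y) _ _; set Y1 := rv (k3 y) _ _.
apply/eqP; rewrite -subr_eq0.
have -> : X0 * Y0 - X1 * Y1 + wC * (X0 * Y1 + X1 * Y0 - X1 * Y1) -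
  (X0 + wC * X1) * (Y0 + wC * Y1) = - (wC ^+ 2 + wC + 1) * (X1 * Y1) by ring.
by rewrite wC_eq oppr0 mul0r.
Qed.

End Eval2.

End M_E.
Import M_E.

Module M_I.

Local Open Scope Z_scope.
Definition normZ (a b c : Z) : Z := a*a*a - 2*b*b*b + 4*c*c*c + 6*a*b*c.
Lemma descent (n : nat) : forall a b c : Z,
  Z.abs a + Z.abs b + Z.abs c <= Z.of_nat n ->
  normZ a b c = 0 -> a = Z0 /\ b = Z0 /\ c = Z0.
Proof.
rewrite /normZ.
elim: n => [|n IH] a b c hs he; first by lia.
have [[a1 ha]|[a1 ha]] := Z.Even_or_Odd a; last by subst; lia.
subst a.
have [[b1 hb]|[b1 hb]] := Z.Even_or_Odd b; last by subst; lia.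
subst b.
have [[c1 hc]|[c1 hc]] := Z.Even_or_Odd c; last by subst; lia.
subst c.
have he' : normZ a1 b1 c1 = 0 by rewrite /normZ; lia.
have hs' : Z.abs a1 + Z.abs b1 + Z.abs c1 <= Z.of_nat n by lia.
have := IH _ _ _ hs' he'; lia.
Qed.
Local Close Scope Z_scope.

Local Open Scope ring_scope.

Section Inj.
Variable C : numClosedFieldType.

Lemma rv_eq0 a b c : rv C a b c = 0 -> [/\ a = Z0, b = Z0 & c = Z0].
Proof.
move=> h.
have hN : zC C (normZ a b c) =
  rv C a b c * ((zC C a ^+ 2 + 2 * zC C b * zC C c) + (- 2 * zC C c ^+ 2 - zC C a * zC C b) * rC C
     + (zC C b ^+ 2 - zC C a * zC C c) * rC C ^+ 2)
  - (rC C ^+ 3 + 2) * (- 2 * zC C c ^+ 3 + zC C b ^+ 2 * zC C c * rC C + zC C b ^+ 3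
       - zC C a * zC C c ^+ 2 * rC C - 2 * zC C a * zC C b * zC C c).
  rewrite /rv /normZ !(zCD, zCM, zCB, zCN) !zC2 -[zC C 4]/(4%:R) -[zC C 6]/(6%:R).
  ring.
rewrite h mul0r rC_eq mul0r subr0 in hN.
have := zC_eq0 hN.
have := @descent (Z.to_nat (Z.abs a + Z.abs b + Z.abs c)) a b c.
move=> H1 H2; have [] := H1 _ H2; first lia.
by move=> -> [-> ->].
Qed.

Lemma rv_real a b c : rv C a b c \is Num.real.
Proof.
by rewrite /rv ?rpredD ?rpredM ?rpredX ?rC_real // /zC realz.
Qed.

Lemma real_w_eq0 (P Q : C) : P \is Num.real -> Q \is Num.real ->
  P + wC C * Q = 0 -> P = 0 /\ Q = 0.
Proof.
move=> rP rQ h.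
have hP : P = - (wC C * Q) by apply/eqP; rewrite -addr_eq0 h.
have e : (2 * P - Q) ^+ 2 + 3 * Q ^+ 2 = 0.
  have -> : (2 * P - Q) ^+ 2 + 3 * Q ^+ 2 = 4 * (P ^+ 2 - P * Q + Q ^+ 2) by ring.
  have -> : P ^+ 2 - P * Q + Q ^+ 2 = Q ^+ 2 * (wC C ^+ 2 + wC C + 1) by rewrite hP; ring.
  by rewrite wC_eq !mulr0.
have g1 : 0 <= (2 * P - Q) ^+ 2 by apply: real_exprn_even_ge0; rewrite ?rpredB ?rpredM ?rpred_nat.
have g2 : 0 <= 3 * Q ^+ 2 by rewrite mulr_ge0 ?ler0n ?real_exprn_even_ge0.
move/eqP: e; rewrite paddr_eq0 // => /andP[_].
rewrite mulf_eq0 pnatr_eq0 /= sqrf_eq0 => /eqP hQ.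
by move: hP; rewrite hQ mulr0 oppr0.
Qed.

Lemma eval_eq0 x : eval C x = 0 -> x = K0.
Proof.
rewrite /eval => h.
have [h1 h2] := real_w_eq0 (rv_real _ _ _) (rv_real _ _ _) h.
case/rv_eq0: h1 => e0 e1 e2; case/rv_eq0: h2 => e3 e4 e5.
by clear h; case: x e0 e1 e2 e3 e4 e5 => /= ? ? ? ? ? ? -> -> -> -> -> ->.
Qed.

End Inj.

End M_I.
Import M_I.

Module M_G.
Local Open Scope ring_scope.

Lemma L3gen (R : comNzRingType) (w p q : R) : w ^+ 2 + w + 1 = 0 ->
  (p + q) * (p + w * q) * (p + (- 1 - w) * q) = p ^+ 3 + q ^+ 3.
Proof.
move=> h.
have -> : (p + q) * (p + w * q) * (p + (- 1 - w) * q) =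
  p ^+ 3 + q ^+ 3 - (p + q) * q ^+ 2 * (w ^+ 2 + w + 1) by ring.
by rewrite h mulr0 subr0.
Qed.

Lemma L9gen (R : comNzRingType) (w a b c : R) : w ^+ 2 + w + 1 = 0 ->
  let e0 := 1 in let e1 := w in let e2 := - 1 - w in
  ((e0 * a + e0 * b + c) * (e0 * a + e1 * b + c) * (e0 * a + e2 * b + c)) *
  ((e1 * a + e0 * b + c) * (e1 * a + e1 * b + c) * (e1 * a + e2 * b + c)) *
  ((e2 * a + e0 * b + c) * (e2 * a + e1 * b + c) * (e2 * a + e2 * b + c)) =
  (a ^+ 3 + b ^+ 3 + c ^+ 3) ^+ 3 - 27 * a ^+ 3 * b ^+ 3 * c ^+ 3.
Proof.
move=> h /=.
apply/eqP; rewrite -subr_eq0; apply/eqP.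
have -> : ((1 * a + 1 * b + c) * (1 * a + w * b + c) * (1 * a + (- 1 - w) * b + c)) *
  ((w * a + 1 * b + c) * (w * a + w * b + c) * (w * a + (- 1 - w) * b + c)) *
  (((- 1 - w) * a + 1 * b + c) * ((- 1 - w) * a + w * b + c) * ((- 1 - w) * a + (- 1 - w) * b + c)) -
  ((a ^+ 3 + b ^+ 3 + c ^+ 3) ^+ 3 - 27 * a ^+ 3 * b ^+ 3 * c ^+ 3) =
  (w ^+ 2 + w + 1) * (- 3*b^+2*c^+7 - 3*b^+3*c^+6 + 3*b^+4*c^+5 + 3*b^+4*c^+5*w + 3*b^+4*c^+5*w^+2 + 6*b^+5*c^+4*w + 6*b^+5*c^+4*w^+2 - 4*b^+6*c^+3 + b^+6*c^+3*w - 2*b^+6*c^+3*w^+3 - b^+6*c^+3*w^+4 - 3*b^+7*c^+2*w - 6*b^+7*c^+2*w^+2 - 6*b^+7*c^+2*w^+3 - 3*b^+7*c^+2*w^+4 - 3*b^+8*c*w^+2 - 6*b^+8*c*w^+3 - 3*b^+8*c*w^+4 - b^+9 + b^+9*w - 2*b^+9*w^+3 - b^+9*w^+4 - 3*a^+2*c^+7 + 3*a^+2*b^+2*c^+5 + 3*a^+2*b^+2*c^+5*w + 3*a^+2*b^+2*c^+5*w^+2 - 3*a^+2*b^+3*c^+4*w - 3*a^+2*b^+3*c^+4*w^+2 - a^+2*b^+4*c^+3 - 2*a^+2*b^+4*c^+3*w - 3*a^+2*b^+4*c^+3*w^+2 - 2*a^+2*b^+4*c^+3*w^+3 - a^+2*b^+4*c^+3*w^+4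 + 6*a^+2*b^+5*c^+2*w + 12*a^+2*b^+5*c^+2*w^+2 + 12*a^+2*b^+5*c^+2*w^+3 + 6*a^+2*b^+5*c^+2*w^+4 + a^+2*b^+6*c + 3*a^+2*b^+6*c*w + 12*a^+2*b^+6*c*w^+2 + 19*a^+2*b^+6*c*w^+3 + 12*a^+2*b^+6*c*w^+4 + 3*a^+2*b^+6*c*w^+5 + a^+2*b^+6*c*w^+6 + a^+2*b^+7*w + 3*a^+2*b^+7*w^+2 + 5*a^+2*b^+7*w^+3 + 5*a^+2*b^+7*w^+4 + 3*a^+2*b^+7*w^+5 + a^+2*b^+7*w^+6 - 3*a^+3*c^+6 - 3*a^+3*b^+2*c^+4*w - 3*a^+3*b^+2*c^+4*w^+2 + 21*a^+3*b^+3*c^+3 - 21*a^+3*b^+3*c^+3*w - 21*a^+3*b^+3*c^+3*w^+2 - 3*a^+3*b^+4*c^+2*w - 6*a^+3*b^+4*c^+2*w^+2 - 6*a^+3*b^+4*c^+2*w^+3 - 3*a^+3*b^+4*c^+2*w^+4 + 3*a^+3*b^+5*c*w^+2 + 6*a^+3*b^+5*c*w^+3 + 3*a^+3*b^+5*c*w^+4 - 3*a^+3*b^+6 + 4*a^+3*b^+6*w + 3*a^+3*b^+6*w^+2 - a^+3*b^+6*w^+3 + 2*a^+3*b^+6*w^+4 + 3*a^+3*b^+6*w^+5 + a^+3*b^+6*w^+6 + 3*a^+4*c^+5 + 3*a^+4*c^+5*w + 3*a^+4*c^+5*w^+2 - a^+4*b^+2*c^+3 - 2*a^+4*b^+2*c^+3*w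 - 3*a^+4*b^+2*c^+3*w^+2 - 2*a^+4*b^+2*c^+3*w^+3 - a^+4*b^+2*c^+3*w^+4 - 3*a^+4*b^+3*c^+2*w - 6*a^+4*b^+3*c^+2*w^+2 - 6*a^+4*b^+3*c^+2*w^+3 - 3*a^+4*b^+3*c^+2*w^+4 - 2*a^+4*b^+4*c - 6*a^+4*b^+4*c*w - 12*a^+4*b^+4*c*w^+2 - 14*a^+4*b^+4*c*w^+3 - 12*a^+4*b^+4*c*w^+4 - 6*a^+4*b^+4*c*w^+5 - 2*a^+4*b^+4*c*w^+6 - 2*a^+4*b^+5*w - 6*a^+4*b^+5*w^+2 - 10*a^+4*b^+5*w^+3 - 10*a^+4*b^+5*w^+4 - 6*a^+4*b^+5*w^+5 - 2*a^+4*b^+5*w^+6 + 6*a^+5*c^+4*w + 6*a^+5*c^+4*w^+2 + 6*a^+5*b^+2*c^+2*w + 12*a^+5*b^+2*c^+2*w^+2 + 12*a^+5*b^+2*c^+2*w^+3 + 6*a^+5*b^+2*c^+2*w^+4 + 3*a^+5*b^+3*c*w^+2 + 6*a^+5*b^+3*c*w^+3 + 3*a^+5*b^+3*c*w^+4 - 2*a^+5*b^+4*w - 6*a^+5*b^+4*w^+2 - 10*a^+5*b^+4*w^+3 - 10*a^+5*b^+4*w^+4 - 6*a^+5*b^+4*w^+5 - 2*a^+5*b^+4*w^+6 - 4*a^+6*c^+3 + a^+6*c^+3*w - 2*a^+6*c^+3*w^+3 - a^+6*c^+3*w^+4 + a^+6*b^+2*c + 3*a^+6*b^+2*c*w + 12*a^+6*b^+2*c*w^+2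 + 19*a^+6*b^+2*c*w^+3 + 12*a^+6*b^+2*c*w^+4 + 3*a^+6*b^+2*c*w^+5 + a^+6*b^+2*c*w^+6 - 3*a^+6*b^+3 + 4*a^+6*b^+3*w + 3*a^+6*b^+3*w^+2 - a^+6*b^+3*w^+3 + 2*a^+6*b^+3*w^+4 + 3*a^+6*b^+3*w^+5 + a^+6*b^+3*w^+6 - 3*a^+7*c^+2*w - 6*a^+7*c^+2*w^+2 - 6*a^+7*c^+2*w^+3 - 3*a^+7*c^+2*w^+4 + a^+7*b^+2*w + 3*a^+7*b^+2*w^+2 + 5*a^+7*b^+2*w^+3 + 5*a^+7*b^+2*w^+4 + 3*a^+7*b^+2*w^+5 + a^+7*b^+2*w^+6 - 3*a^+8*c*w^+2 - 6*a^+8*c*w^+3 - 3*a^+8*c*w^+4 - a^+9 + a^+9*w - 2*a^+9*w^+3 - a^+9*w^+4) by ring.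
by rewrite h mul0r.
Qed.

Lemma cuberoot1 (F : idomainType) (w t : F) : w ^+ 2 + w + 1 = 0 -> t ^+ 3 = 1 ->
  [\/ t = 1, t = w | t = - 1 - w].
Proof.
move=> h ht.
have : (t - 1) * (t - w) * (t - (- 1 - w)) = 0.
  have -> : (t - 1) * (t - w) * (t - (- 1 - w)) = t ^+ 3 - 1 - (t - 1) * (w ^+ 2 + w + 1) by ring.
  by rewrite h mulr0 ht subrr subr0.
move/eqP; rewrite !mulf_eq0 !subr_eq0 => /orP[/orP[]|] /eqP ->.
- by constructor 1.
- by constructor 2.
- by constructor 3.
Qed.

Lemma L3shape (R : comNzRingType) (w p q : R) : w ^+ 2 + w + 1 = 0 ->
  (p + 1 * q) * ((p + w * q) * (p + (- 1 - w) * q)) = p ^+ 3 + q ^+ 3.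
Proof. by move=> h; rewrite -(L3gen p q h); ring. Qed.

Lemma L9shape (R : comNzRingType) (w a b c : R) : w ^+ 2 + w + 1 = 0 ->
  ((1 * a + 1 * b + c) * ((1 * a + w * b + c) * (1 * a + (- 1 - w) * b + c))) *
  (((w * a + 1 * b + c) * ((w * a + w * b + c) * (w * a + (- 1 - w) * b + c))) *
  (((- 1 - w) * a + 1 * b + c) * (((- 1 - w) * a + w * b + c) * ((- 1 - w) * a + (- 1 - w) * b + c)))) =
  (a ^+ 3 + b ^+ 3 + c ^+ 3) ^+ 3 - 27 * a ^+ 3 * b ^+ 3 * c ^+ 3.
Proof.
move=> h.
apply/eqP; rewrite -subr_eq0; apply/eqP.
have -> : ((1 * a + 1 * b + c) * ((1 * a + w * b + c) * (1 * a + (- 1 - w) * b + c))) *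
  (((w * a + 1 * b + c) * ((w * a + w * b + c) * (w * a + (- 1 - w) * b + c))) *
  (((- 1 - w) * a + 1 * b + c) * (((- 1 - w) * a + w * b + c) * ((- 1 - w) * a + (- 1 - w) * b + c)))) -
  ((a ^+ 3 + b ^+ 3 + c ^+ 3) ^+ 3 - 27 * a ^+ 3 * b ^+ 3 * c ^+ 3) =
  (w ^+ 2 + w + 1) * (- 3*b^+2*c^+7 - 3*b^+3*c^+6 + 3*b^+4*c^+5 + 3*b^+4*c^+5*w + 3*b^+4*c^+5*w^+2 + 6*b^+5*c^+4*w + 6*b^+5*c^+4*w^+2 - 4*b^+6*c^+3 + b^+6*c^+3*w - 2*b^+6*c^+3*w^+3 - b^+6*c^+3*w^+4 - 3*b^+7*c^+2*w - 6*b^+7*c^+2*w^+2 - 6*b^+7*c^+2*w^+3 - 3*b^+7*c^+2*w^+4 - 3*b^+8*c*w^+2 - 6*b^+8*c*w^+3 - 3*b^+8*c*w^+4 - b^+9 + b^+9*w - 2*b^+9*w^+3 - b^+9*w^+4 - 3*a^+2*c^+7 + 3*a^+2*b^+2*c^+5 + 3*a^+2*b^+2*c^+5*w + 3*a^+2*b^+2*c^+5*w^+2 - 3*a^+2*b^+3*c^+4*w - 3*a^+2*b^+3*c^+4*w^+2 - a^+2*b^+4*c^+3 - 2*a^+2*b^+4*c^+3*w - 3*a^+2*b^+4*c^+3*w^+2 - 2*a^+2*b^+4*c^+3*w^+3 - a^+2*b^+4*c^+3*w^+4 + 6*a^+2*b^+5*c^+2*w + 12*a^+2*b^+5*c^+2*w^+2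 + 12*a^+2*b^+5*c^+2*w^+3 + 6*a^+2*b^+5*c^+2*w^+4 + a^+2*b^+6*c + 3*a^+2*b^+6*c*w + 12*a^+2*b^+6*c*w^+2 + 19*a^+2*b^+6*c*w^+3 + 12*a^+2*b^+6*c*w^+4 + 3*a^+2*b^+6*c*w^+5 + a^+2*b^+6*c*w^+6 + a^+2*b^+7*w + 3*a^+2*b^+7*w^+2 + 5*a^+2*b^+7*w^+3 + 5*a^+2*b^+7*w^+4 + 3*a^+2*b^+7*w^+5 + a^+2*b^+7*w^+6 - 3*a^+3*c^+6 - 3*a^+3*b^+2*c^+4*w - 3*a^+3*b^+2*c^+4*w^+2 + 21*a^+3*b^+3*c^+3 - 21*a^+3*b^+3*c^+3*w - 21*a^+3*b^+3*c^+3*w^+2 - 3*a^+3*b^+4*c^+2*w - 6*a^+3*b^+4*c^+2*w^+2 - 6*a^+3*b^+4*c^+2*w^+3 - 3*a^+3*b^+4*c^+2*w^+4 + 3*a^+3*b^+5*c*w^+2 + 6*a^+3*b^+5*c*w^+3 + 3*a^+3*b^+5*c*w^+4 - 3*a^+3*b^+6 + 4*a^+3*b^+6*w + 3*a^+3*b^+6*w^+2 - a^+3*b^+6*w^+3 + 2*a^+3*b^+6*w^+4 + 3*a^+3*b^+6*w^+5 + a^+3*b^+6*w^+6 + 3*a^+4*c^+5 + 3*a^+4*c^+5*w + 3*a^+4*c^+5*w^+2 - a^+4*b^+2*c^+3 - 2*a^+4*b^+2*c^+3*w - 3*a^+4*b^+2*c^+3*w^+2 - 2*a^+4*b^+2*c^+3*w^+3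 - a^+4*b^+2*c^+3*w^+4 - 3*a^+4*b^+3*c^+2*w - 6*a^+4*b^+3*c^+2*w^+2 - 6*a^+4*b^+3*c^+2*w^+3 - 3*a^+4*b^+3*c^+2*w^+4 - 2*a^+4*b^+4*c - 6*a^+4*b^+4*c*w - 12*a^+4*b^+4*c*w^+2 - 14*a^+4*b^+4*c*w^+3 - 12*a^+4*b^+4*c*w^+4 - 6*a^+4*b^+4*c*w^+5 - 2*a^+4*b^+4*c*w^+6 - 2*a^+4*b^+5*w - 6*a^+4*b^+5*w^+2 - 10*a^+4*b^+5*w^+3 - 10*a^+4*b^+5*w^+4 - 6*a^+4*b^+5*w^+5 - 2*a^+4*b^+5*w^+6 + 6*a^+5*c^+4*w + 6*a^+5*c^+4*w^+2 + 6*a^+5*b^+2*c^+2*w + 12*a^+5*b^+2*c^+2*w^+2 + 12*a^+5*b^+2*c^+2*w^+3 + 6*a^+5*b^+2*c^+2*w^+4 + 3*a^+5*b^+3*c*w^+2 + 6*a^+5*b^+3*c*w^+3 + 3*a^+5*b^+3*c*w^+4 - 2*a^+5*b^+4*w - 6*a^+5*b^+4*w^+2 - 10*a^+5*b^+4*w^+3 - 10*a^+5*b^+4*w^+4 - 6*a^+5*b^+4*w^+5 - 2*a^+5*b^+4*w^+6 - 4*a^+6*c^+3 + a^+6*c^+3*w - 2*a^+6*c^+3*w^+3 - a^+6*c^+3*w^+4 + a^+6*b^+2*c + 3*a^+6*b^+2*c*w + 12*a^+6*b^+2*c*w^+2 + 19*a^+6*b^+2*c*w^+3 + 12*a^+6*b^+2*c*w^+4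 + 3*a^+6*b^+2*c*w^+5 + a^+6*b^+2*c*w^+6 - 3*a^+6*b^+3 + 4*a^+6*b^+3*w + 3*a^+6*b^+3*w^+2 - a^+6*b^+3*w^+3 + 2*a^+6*b^+3*w^+4 + 3*a^+6*b^+3*w^+5 + a^+6*b^+3*w^+6 - 3*a^+7*c^+2*w - 6*a^+7*c^+2*w^+2 - 6*a^+7*c^+2*w^+3 - 3*a^+7*c^+2*w^+4 + a^+7*b^+2*w + 3*a^+7*b^+2*w^+2 + 5*a^+7*b^+2*w^+3 + 5*a^+7*b^+2*w^+4 + 3*a^+7*b^+2*w^+5 + a^+7*b^+2*w^+6 - 3*a^+8*c*w^+2 - 6*a^+8*c*w^+3 - 3*a^+8*c*w^+4 - a^+9 + a^+9*w - 2*a^+9*w^+3 - a^+9*w^+4) by ring.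
by rewrite h mul0r.
Qed.

End M_G.
Import M_G.

Module M_D.

Definition KV := (KK * KK * KK)%type.
Definition crossK (u v : KV) : KV :=
  (subK (mulK u.1.2 v.2) (mulK u.2 v.1.2),
   subK (mulK u.2 v.1.1) (mulK u.1.1 v.2),
   subK (mulK u.1.1 v.1.2) (mulK u.1.2 v.1.1)).
Definition dotK (u v : KV) : KK :=
  addK (addK (mulK u.1.1 v.1.1) (mulK u.1.2 v.1.2)) (mulK u.2 v.2).
Definition isK0v (v : KV) : bool := isK0 v.1.1 && isK0 v.1.2 && isK0 v.2.
Definition cubeK x := mulK x (mulK x x).

Definition Ke (j : nat) : KK :=
  if j == 0 then K1 else if j == 1 then Kw else oppK (addK K1 Kw).
Definition ptK (a b t : nat) : KV :=
  if t == 0 then (K1, Ke a, mulK Kr (Ke b))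
  else if t == 1 then (mulK Kr (Ke b), K1, Ke a)
  else (Ke a, mulK Kr (Ke b), K1).
Definition ptI (i : nat) : KV := ptK (i %/ 9) (i %/ 3 %% 3) (i %% 3).

Definition setv (t s : nat) (x y : KK) : KV :=
  let f k := if k == t then x else if k == s then y else K0 in (f 0, f 1, f 2).
Definition axl (t s : nat) (c : KK) (j : nat) : KV := setv t s K1 (mulK c (Ke j)).
Definition Km1 := Kz (-1). Definition Kmr := oppK Kr.
Definition axT := [:: 1; 2; 2; 2; 0; 0; 0; 1; 1]%N.
Definition axS := [:: 0; 0; 1; 1; 1; 2; 2; 2; 0]%N.
Definition axC := [:: Km1; Kmr; Kmr; Km1; Kmr; Kmr; Km1; Kmr; Kmr].
Definition orbA := [:: (mkK (1) (-1) (0) (0) (0) (0)); (mkK (1) (0) (0) (0) (0) (-1)); (mkK (0) (-1) (0) (1) (0) (0)); (mkK (1) (0) (-1) (0) (0) (0)); (mkK (0) (-1) (0) (1) (0) (0)); (mkK (1) (0) (0) (0) (0) (-1))].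
Definition orbB := [:: (mkK (-1) (0) (0) (0) (0) (1)); (mkK (-1) (1) (0) (0) (0) (0)); (mkK (0) (0) (1) (-1) (0) (0)); (mkK (-1) (0) (0) (0) (1) (0)); (mkK (0) (0) (0) (-1) (0) (1)); (mkK (-1) (0) (0) (0) (1) (0))].
Definition orbC := [:: (mkK (1) (0) (0) (0) (-1) (0)); (mkK (-1) (0) (0) (0) (1) (0)); (mkK (1) (-1) (0) (0) (0) (0)); (mkK (0) (1) (0) (-1) (0) (0)); (mkK (1) (0) (0) (0) (-1) (0)); (mkK (0) (0) (0) (-1) (1) (0))].

Definition xyzl (o i j : nat) : KV :=
  (mulK (nth K0 orbA o) (Ke i), mulK (nth K0 orbB o) (Ke j), nth K0 orbC o).
Definition axlg (g j : nat) : KV := axl (nth 0 axT g) (nth 0 axS g) (nth K0 axC g) j.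
Definition LsI (m : nat) : KV :=
  if (m < 27)%N then axlg (m %/ 3) (m %% 3)
  else xyzl ((m - 27) %/ 9) ((m - 27) %/ 3 %% 3) ((m - 27) %% 3).
Definition wits : seq (nat * nat * nat) := [:: (0,3,6); (9,12,15); (18,21,24); (0,9,18); (3,12,21); (6,15,24); (0,12,24); (3,15,18); (6,9,21); (1,4,7); (10,13,16); (19,22,25); (1,10,19); (4,13,22); (7,16,25); (1,13,25); (4,16,19); (7,10,22); (2,5,8); (11,14,17); (20,23,26); (2,11,20); (5,14,23); (8,17,26); (2,14,26); (5,17,20); (8,11,23); (0,4,8); (5,16,18); (2,9,19); (1,12,26); (3,13,23); (20,21,25); (7,17,24); (10,14,15); (6,11,22); (0,5,7); (2,10,18); (8,9,22); (4,12,23); (3,16,20); (19,21,26); (1,14,24); (11,13,15); (6,17,25); (0,10,20); (18,22,26); (7,9,23); (11,12,16); (3,17,19); (4,14,21); (2,13,24); (8,15,25); (1,5,6); (0,11,19); (4,17,18); (9,14,16); (2,12,25); (1,3,8); (5,13,21); (20,22,24); (7,15,26); (6,10,23); (0,13,26); (18,23,25); (1,9,20); (10,12,17); (3,14,22); (7,11,21); (8,16,24); (5,15,19); (2,4,6); (0,14,25); (1,11,18); (9,13,17); (5,12,22); (2,3,7); (8,10,21); (19,23,24); (4,15,20); (6,16,26)].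

Definition fermK (v : KV) := addK (addK (cubeK v.1.1) (cubeK v.1.2)) (cubeK v.2).
Definition sextK (v : KV) := mulK (mulK (subK (cubeK v.1.1) (cubeK v.1.2))
   (subK (cubeK v.1.2) (cubeK v.2))) (subK (cubeK v.2) (cubeK v.1.1)).

Definition check_pts : bool :=
  all (fun i => [&& ~~ isK0v (ptI i), isK0 (fermK (ptI i)), isK0 (sextK (ptI i)) &
       all (fun j => if i == j then true else ~~ isK0v (crossK (ptI i) (ptI j))) (iota 0 27)])
    (iota 0 27).

Definition check_lines : bool :=
  all (fun m => [&& ~~ isK0v (LsI m),
       all (fun m' => if m == m' then true else ~~ isK0v (crossK (LsI m) (LsI m'))) (iota 0 81) &
       (let: (i, j, k) := nth (0,0,0)%N wits m in
        [&& (i < j)%N, (j < k)%N, (k < 27)%N, isK0 (dotK (LsI m) (ptI i)),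
            isK0 (dotK (LsI m) (ptI j)) & isK0 (dotK (LsI m) (ptI k))])])
    (iota 0 81).

Definition tripleOK (i j k : nat) : bool :=
  if isK0 (dotK (ptI k) (crossK (ptI i) (ptI j))) then
    has (fun m => isK0v (crossK (crossK (ptI i) (ptI j)) (LsI m))) (iota 0 81)
  else true.
Definition check_triples : bool :=
  all (fun i => all (fun j => if i == j then true else
     all (fun k => if (k == i) || (k == j) then true else tripleOK i j k) (iota 0 27))
     (iota 0 27)) (iota 0 27).

End M_D.
Import M_D.

Module M_P.

Definition mon := (nat * nat * nat)%type.
Definition CP := seq (mon * KK).
Definition addm (m n : mon) : mon := (m.1.1 + n.1.1, m.1.2 + n.1.2, m.2 + n.2)%N.
Definition mulP (p q : CP) : CP :=
  flatten [seq [seq (addm t.1 s.1, mulK t.2 s.2) | s <- q] | t <- p].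
Definition sumK (l : seq KK) : KK := foldr addK K0 l.
Fixpoint insP (t : mon * KK) (acc : CP) : CP :=
  match acc with
  | [::] => [:: t]
  | u :: acc' => if u.1 == t.1 then (u.1, addK u.2 t.2) :: acc' else u :: insP t acc'
  end.
Definition normP (p : CP) : CP := foldr insP [::] p.
Definition unitm (t : nat) : mon :=
  if t == 0 then (1, 0, 0)%N else if t == 1 then (0, 1, 0)%N else (0, 0, 1)%N.
Definition axisP (g : nat) : CP :=
  [:: (unitm (nth 0 axT g), K1); (unitm (nth 0 axS g), cubeK (nth K0 axC g))].
Definition linP (o : nat) : CP :=
  [:: ((1,0,0)%N, cubeK (nth K0 orbA o)); ((0,1,0)%N, cubeK (nth K0 orbB o));
      ((0,0,1)%N, cubeK (nth K0 orbC o))].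
Definition orbP (o : nat) : CP :=
  normP (mulP (linP o) (mulP (linP o) (linP o))) ++
  [:: ((1,1,1)%N, mulK (Kz (-27)) (mulK (cubeK (nth K0 orbA o))
        (mulK (cubeK (nth K0 orbB o)) (cubeK (nth K0 orbC o)))))].
Definition groups : seq CP := [seq axisP g | g <- iota 0 9] ++ [seq orbP o | o <- iota 0 6].
Definition stepP (acc g : CP) : CP := normP (mulP acc g).
Definition bigP : CP := foldl stepP [:: ((0,0,0)%N, K1)] groups.
Local Open Scope Z_scope.
Definition Dz : Z := 28875.
Definition c0K : KK := mkK 1219357561566375 1443092893963875 369163298455875 1812256192419750 469844198034750 (-771886896771375).
Definition nq (x : KK) : Z := Z.div (Dz * k0 x) (k0 c0K).
Local Close Scope Z_scope.
Opaque bigP.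
Definition check_ratio : bool :=
  ~~ isK0 c0K && all (fun t => eqK (mulK (Kz Dz) t.2) (mulK (Kz (nq t.2)) c0K)) bigP.

End M_P.
Import M_P.

Module M_M.
Local Open Scope ring_scope.

Section Bridge.
Variable C : numClosedFieldType.
Notation MP := {mpoly C[3]}.
Definition X0 : MP := 'X_(@Ordinal 3 0 isT).
Definition X1 : MP := 'X_(@Ordinal 3 1 isT).
Definition X2 : MP := 'X_(@Ordinal 3 2 isT).
Definition monoM (m : mon) : MP := (X0 ^+ 3) ^+ m.1.1 * (X1 ^+ 3) ^+ m.1.2 * (X2 ^+ 3) ^+ m.2.
Definition term (t : mon * KK) : MP := (eval C t.2)%:MP * monoM t.1.
Definition evalP (p : CP) : MP := \sum_(t <- p) term t.

Lemma monoM_add m n : monoM (addm m n) = monoM m * monoM n.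
Proof. rewrite /monoM /addm /= !exprD; ring. Qed.

Lemma evalP_cons t p : evalP (t :: p) = term t + evalP p.
Proof. by rewrite /evalP big_cons. Qed.
Lemma evalP_nil : evalP [::] = 0.
Proof. by rewrite /evalP big_nil. Qed.
Lemma evalP_cat p q : evalP (p ++ q) = evalP p + evalP q.
Proof. by rewrite /evalP big_cat. Qed.

Lemma evalP_ins t acc : evalP (insP t acc) = term t + evalP acc.
Proof.
elim: acc => [|u acc IH] /=; first by rewrite evalP_cons evalP_nil.
case: eqP => [e|_].
  rewrite !evalP_cons /term /= eval_add rmorphD /= e; ring.
by rewrite !evalP_cons IH; ring.
Qed.

Lemma evalP_norm p : evalP (normP p) = evalP p.
Proof.
elim: p => [|t p IH] //=; by rewrite evalP_ins IH evalP_cons.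
Qed.

Lemma evalP_mul p q : evalP (mulP p q) = evalP p * evalP q.
Proof.
rewrite /evalP /mulP big_flatten big_map /= big_distrl /=.
apply: eq_bigr => t _; rewrite big_map big_distrr /=.
apply: eq_bigr => u _; rewrite /term /= monoM_add eval_mul rmorphM /=; ring.
Qed.

Lemma evalP_fold gs a : evalP (foldl stepP a gs) = evalP a * \prod_(g <- gs) evalP g.
Proof.
elim: gs a => [|g gs IH] a /=; first by rewrite big_nil mulr1.
by rewrite IH /stepP evalP_norm evalP_mul big_cons mulrA.
Qed.

Lemma evalP_bigP : evalP bigP = \prod_(g <- groups) evalP g.
Proof.
rewrite /bigP evalP_fold.
have -> : evalP [:: ((0,0,0)%N, K1)] = 1.
  rewrite evalP_cons evalP_nil /term eval_K1 /monoM.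
  by rewrite !expr0 !mulr1 addr0 rmorph1.
by rewrite mul1r.
Qed.

Definition isInt (x : C) := exists z : int, x = z%:~R.
Lemma isInt0 : isInt 0. Proof. by exists 0. Qed.
Lemma isIntD x y : isInt x -> isInt y -> isInt (x + y).
Proof. by move=> [a ->] [b ->]; exists (a + b); rewrite intrD. Qed.
Lemma isIntM x y : isInt x -> isInt y -> isInt (x * y).
Proof. by move=> [a ->] [b ->]; exists (a * b); rewrite intrM. Qed.
Lemma isIntn (n : nat) : isInt n%:R.
Proof. by exists n. Qed.

Definition intP (p : MP) := forall m, isInt p@_m.
Lemma intP_int_mpoly p : intP p -> int_mpoly p.
Proof. by []. Qed.
Lemma intPD p q : intP p -> intP q -> intP (p + q).
Proof. by move=> hp hq m; rewrite mcoeffD; apply: isIntD. Qed.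
Lemma intP0 : intP 0.
Proof. by move=> m; rewrite mcoeff0; apply: isInt0. Qed.
Lemma intPM p q : intP p -> intP q -> intP (p * q).
Proof.
move=> hp hq m; rewrite mcoeffM.
apply: (big_ind (fun x => isInt x)); [exact: isInt0|exact: isIntD|].
by move=> k _; apply: isIntM.
Qed.
Lemma intPC (z : int) : intP (z%:~R)%:MP.
Proof. by move=> m; rewrite mcoeffC; apply: isIntM; [exists z|apply: isIntn]. Qed.
Lemma intP1 : intP 1.
Proof. by have := intPC 1; rewrite rmorph1. Qed.
Lemma intPX (i : 'I_3) : intP 'X_i.
Proof. by move=> m; rewrite mcoeffX; apply: isIntn. Qed.
Lemma intPexp p n : intP p -> intP (p ^+ n).
Proof.
move=> hp; elim: n => [|n IH]; first by rewrite expr0; apply: intP1.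
by rewrite exprS; apply: intPM.
Qed.
Lemma intP_monoM m : intP (monoM m).
Proof. by rewrite /monoM; do 2?apply: intPM; do 2?apply: intPexp; apply: intPX. Qed.

Definition Qint : MP := \sum_(t <- bigP) (zC C (nq t.2))%:MP * monoM t.1.
Lemma intP_Qint : intP Qint.
Proof.
rewrite /Qint; apply: (big_ind intP); [exact: intP0|exact: intPD|].
by move=> t _; apply: intPM; [apply: intPC|apply: intP_monoM].
Qed.

Lemma check_ratio_true : check_ratio = true.
Proof. by vm_compute. Qed.

Lemma zCDz_neq0 : zC C Dz != 0.
Proof. by apply/eqP => /zC_eq0. Qed.

Lemma ratio_list (p : CP) :
  all (fun t => eqK (mulK (Kz Dz) t.2) (mulK (Kz (nq t.2)) c0K)) p ->
  \sum_(t <- p) term t = (eval C c0K / zC C Dz) *: \sum_(t <- p) (zC C (nq t.2))%:MP * monoM t.1.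
Proof.
elim: p => [|t p IH] /=; first by rewrite !big_nil scaler0.
move=> /andP[/eqKP /(congr1 (eval C)) e /IH {}IH].
rewrite !big_cons IH scalerDr; congr (_ + _).
rewrite !eval_mul !eval_Kz in e.
rewrite /term.
set c := eval C c0K / zC C Dz.
have -> : c *: ((zC C (nq t.2))%:MP * monoM t.1) = (c * zC C (nq t.2))%:MP * monoM t.1.
  by rewrite -mul_mpolyC mulrA -mpolyCM.
congr (_%:MP * _); rewrite /c.
apply: (mulfI zCDz_neq0); rewrite e; field; exact: zCDz_neq0.
Qed.

Lemma evalP_bigP_ratio : evalP bigP = (eval C c0K / zC C Dz) *: Qint.
Proof.
have := check_ratio_true; rewrite /check_ratio => /andP[_ H].
rewrite /evalP /Qint; exact: (ratio_list H).
Qed.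

Lemma c0K_neq0 : eval C c0K != 0.
Proof.
have := check_ratio_true; rewrite /check_ratio => /andP[/negP h _].
apply/eqP => /eval_eq0 e; apply: h; rewrite e; by vm_compute.
Qed.

End Bridge.

End M_M.
Import M_M.

Module M_Geo.
Local Open Scope ring_scope.

Section Geo.
Variable C : numClosedFieldType.
Notation V := (vec3 C).

Definition cross (u v : V) : V :=
  (u.1.2 * v.2 - u.2 * v.1.2, u.2 * v.1.1 - u.1.1 * v.2, u.1.1 * v.1.2 - u.1.2 * v.1.1).
Definition dot (u v : V) : C := u.1.1 * v.1.1 + u.1.2 * v.1.2 + u.2 * v.2.

Lemma on_lineE l p : on_line l p <-> dot l p = 0.
Proof. by []. Qed.

Lemma nonzero3E (v : V) : nonzero3 v <-> [\/ v.1.1 != 0, v.1.2 != 0 | v.2 != 0].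
Proof.
case: v => [[a b] c]; rewrite /nonzero3 /=; split.
  move=> h; case: (eqVneq a 0) => ha; last by constructor 1.
  case: (eqVneq b 0) => hb; last by constructor 2.
  case: (eqVneq c 0) => hc; last by constructor 3.
  by subst.
by case=> /eqP h [] *; subst.
Qed.

Lemma det_zero (l u v w : V) : nonzero3 l -> dot l u = 0 -> dot l v = 0 -> dot l w = 0 ->
  dot w (cross u v) = 0.
Proof.
move=> /nonzero3E hl hu hv hw.
case: l hl hu hv hw => [[l1 l2] l3] /= hl hu hv hw.
case: u hu => [[u1 u2] u3]; case: v hv => [[v1 v2] v3]; case: w hw => [[w1 w2] w3].
rewrite /dot /cross /= => hw hv hu.
set D := _ + _ + _.
have e1 : l1 * D = 0.
  have -> : l1 * D = (u2 * v3 - u3 * v2) * (l1 * w1 + l2 * w2 + l3 * w3)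
    + (w2 * u3 - w3 * u2) * (l1 * v1 + l2 * v2 + l3 * v3)
    - (w2 * v3 - w3 * v2) * (l1 * u1 + l2 * u2 + l3 * u3) by rewrite /D; ring.
  by rewrite hu hv hw !mulr0 !subr0 addr0.
have e2 : l2 * D = 0.
  have -> : l2 * D = (u3 * v1 - u1 * v3) * (l1 * w1 + l2 * w2 + l3 * w3)
    + (w3 * u1 - w1 * u3) * (l1 * v1 + l2 * v2 + l3 * v3)
    - (w3 * v1 - w1 * v3) * (l1 * u1 + l2 * u2 + l3 * u3) by rewrite /D; ring.
  by rewrite hu hv hw !mulr0 !subr0 addr0.
have e3 : l3 * D = 0.
  have -> : l3 * D = (u1 * v2 - u2 * v1) * (l1 * w1 + l2 * w2 + l3 * w3)
    + (w1 * u2 - w2 * u1) * (l1 * v1 + l2 * v2 + l3 * v3)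
    - (w1 * v2 - w2 * v1) * (l1 * u1 + l2 * u2 + l3 * u3) by rewrite /D; ring.
  by rewrite hu hv hw !mulr0 !subr0 addr0.
case: hl => /negPf h.
- by move/eqP: e1; rewrite mulf_eq0 h => /eqP.
- by move/eqP: e2; rewrite mulf_eq0 h => /eqP.
- by move/eqP: e3; rewrite mulf_eq0 h => /eqP.
Qed.

Lemma cross_dot (l u v : V) : dot l u = 0 -> dot l v = 0 -> cross l (cross u v) = (0, 0, 0).
Proof.
case: l => [[l1 l2] l3]; case: u => [[u1 u2] u3]; case: v => [[v1 v2] v3].
rewrite /dot /cross /= => hu hv.
have e1 : l2 * (u1 * v2 - u2 * v1) - l3 * (u3 * v1 - u1 * v3) =
  u1 * (l1 * v1 + l2 * v2 + l3 * v3) - v1 * (l1 * u1 + l2 * u2 + l3 * u3) by ring.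
have e2 : l3 * (u2 * v3 - u3 * v2) - l1 * (u1 * v2 - u2 * v1) =
  u2 * (l1 * v1 + l2 * v2 + l3 * v3) - v2 * (l1 * u1 + l2 * u2 + l3 * u3) by ring.
have e3 : l1 * (u3 * v1 - u1 * v3) - l2 * (u2 * v3 - u3 * v2) =
  u3 * (l1 * v1 + l2 * v2 + l3 * v3) - v3 * (l1 * u1 + l2 * u2 + l3 * u3) by ring.
by rewrite e1 e2 e3 hu hv !mulr0 subrr.
Qed.

Lemma hlp (x y z w : C) : w != 0 -> x * w = y * z -> x = y / w * z.
Proof. by move=> hw e; rewrite mulrAC -e mulfK. Qed.

Lemma case_proj (ai bi aj bj ak bk : C) : bi != 0 -> aj * bi = ai * bj -> ak * bi = ai * bk ->
  [\/ ai != 0, aj != 0 | ak != 0] ->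
  [/\ ai / bi != 0, ai = ai / bi * bi, aj = ai / bi * bj & ak = ai / bi * bk].
Proof.
move=> hb ej ek hnz; split.
- rewrite mulf_eq0 invr_eq0 negb_or hb andbT.
  apply/negP => /eqP a0; move: ej ek; rewrite a0 !mul0r => /eqP ej /eqP ek.
  by move: hnz; rewrite mulf_eq0 (negPf hb) orbF in ej; rewrite mulf_eq0 (negPf hb) orbF in ek;
     rewrite a0 (eqP ej) (eqP ek) eqxx; case.
- by rewrite divfK.
- exact: hlp.
- exact: hlp.
Qed.

Lemma cross_proj (a b : V) : nonzero3 a -> nonzero3 b -> cross a b = (0, 0, 0) -> proj_eq a b.
Proof.
case: a => [[a1 a2] a3]; case: b => [[b1 b2] b3] /nonzero3E /= ha /nonzero3E /= hb.
rewrite /cross /= => [[/eqP h1 /eqP h2 /eqP h3]].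
rewrite !subr_eq0 in h1 h2 h3; move/eqP: h1 => h1; move/eqP: h2 => h2; move/eqP: h3 => h3.
case: hb => hb.
- have [] := @case_proj a1 b1 a2 b2 a3 b3 hb (esym h3) h2 ha.
  by move=> hk e1 e2 e3; exists (a1 / b1); split => //; rewrite -e1 -e2 -e3.
- have ha' : [\/ a2 != 0, a1 != 0 | a3 != 0].
    by case: ha => h; [constructor 2|constructor 1|constructor 3].
  have [] := @case_proj a2 b2 a1 b1 a3 b3 hb h3 (esym h1) ha'.
  by move=> hk e2 e1 e3; exists (a2 / b2); split => //; rewrite -e1 -e2 -e3.
- have ha' : [\/ a3 != 0, a1 != 0 | a2 != 0].
    by case: ha => h; [constructor 2|constructor 3|constructor 1].
  have [] := @case_proj a3 b3 a1 b1 a2 b2 hb (esym h2) h1 ha'.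
  by move=> hk e3 e1 e2; exists (a3 / b3); split => //; rewrite -e1 -e2 -e3.
Qed.

Lemma proj_cross (a b : V) : proj_eq a b -> cross a b = (0, 0, 0).
Proof.
case: a => [[a1 a2] a3]; case: b => [[b1 b2] b3] [k [_ [-> -> ->]]].
rewrite /cross /=; congr (_, _, _); ring.
Qed.

Lemma proj_sym (a b : V) : proj_eq a b -> proj_eq b a.
Proof.
case: a => [[a1 a2] a3]; case: b => [[b1 b2] b3] [k [hk [-> -> ->]]] /=.
exists k^-1; split; first by rewrite invr_eq0.
by rewrite !mulrA !mulVf // !mul1r.
Qed.

Lemma proj_trans (a b c : V) : proj_eq a b -> proj_eq b c -> proj_eq a c.
Proof.
case: a => [[a1 a2] a3]; case: b => [[b1 b2] b3]; case: c => [[c1 c2] c3].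
move=> [k [hk [-> -> ->]]] [k' [hk' [-> -> ->]]] /=.
exists (k * k'); split; first by rewrite mulf_neq0.
by rewrite !mulrA.
Qed.

Lemma proj_nz (a b : V) : proj_eq a b -> nonzero3 b -> nonzero3 a.
Proof.
case: a => [[a1 a2] a3]; case: b => [[b1 b2] b3] [k [hk [-> -> ->]]] /nonzero3E /= hb.
apply/nonzero3E => /=.
by case: hb => h; [constructor 1|constructor 2|constructor 3]; rewrite mulf_neq0.
Qed.

Lemma proj_on_line (l p q : V) : proj_eq p q -> on_line l p -> on_line l q.
Proof.
case: p => [[p1 p2] p3]; case: q => [[q1 q2] q3] [k [hk [-> -> ->]]].
rewrite /on_line /= => h.
have : k * (l.1.1 * q1 + l.1.2 * q2 + l.2 * q3) = 0 by rewrite -h; ring.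
by move/eqP; rewrite mulf_eq0 (negPf hk) => /eqP.
Qed.

Definition evalv (v : KV) : V := (eval C v.1.1, eval C v.1.2, eval C v.2).

Lemma evalv_cross u v : evalv (crossK u v) = cross (evalv u) (evalv v).
Proof. by rewrite /evalv /crossK /cross /= !eval_sub !eval_mul. Qed.

Lemma evalv_dot u v : eval C (dotK u v) = dot (evalv u) (evalv v).
Proof. by rewrite /dotK /dot /= !eval_add !eval_mul. Qed.

Lemma isK0_K0 : isK0 K0. Proof. by []. Qed.

Lemma eval_isK0 x : eval C x = 0 -> isK0 x.
Proof. by move/eval_eq0 ->. Qed.

Lemma isK0_eval x : isK0 x -> eval C x = 0.
Proof. by move/eqKP ->; exact: eval_K0. Qed.

Lemma evalv_nz v : ~~ isK0v v -> nonzero3 (evalv v).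
Proof.
move=> h; rewrite /nonzero3 /evalv => [[/eval_isK0 h1 /eval_isK0 h2 /eval_isK0 h3]].
by move: h; rewrite /isK0v h1 h2 h3.
Qed.

Lemma evalv_zero v : evalv v = (0, 0, 0) -> isK0v v.
Proof.
rewrite /evalv => [[/eval_isK0 h1 /eval_isK0 h2 /eval_isK0 h3]].
by rewrite /isK0v h1 h2 h3.
Qed.

Lemma isK0v_evalv v : isK0v v -> evalv v = (0, 0, 0).
Proof.
by rewrite /isK0v => /andP[/andP[/isK0_eval h1 /isK0_eval h2] /isK0_eval h3]; rewrite /evalv h1 h2 h3.
Qed.

Lemma eval_cube x : eval C (cubeK x) = eval C x ^+ 3.
Proof. by rewrite /cubeK !eval_mul; ring. Qed.

Definition eC (j : nat) : C := eval C (Ke j).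
Lemma eC0 : eC 0 = 1. Proof. exact: eval_K1. Qed.
Lemma eC1 : eC 1 = wC C. Proof. exact: eval_Kw. Qed.
Lemma eC2 : eC 2 = - 1 - wC C.
Proof. by rewrite /eC /Ke /= eval_opp eval_add eval_K1 eval_Kw opprD. Qed.

End Geo.

End M_Geo.
Import M_Geo.

Module M_Geo2.
Local Open Scope ring_scope.

Section Geo2.
Variable C : numClosedFieldType.
Notation V := (vec3 C).
Notation eC := (@eC C).
Notation evalv := (@evalv C).

Lemma ptI_idx a b t : (a < 3)%N -> (b < 3)%N -> (t < 3)%N -> ptI (9 * a + 3 * b + t) = ptK a b t.
Proof.
move=> ha hb ht; rewrite /ptI.
have -> : ((9 * a + 3 * b + t) %/ 9 = a)%N by lia.
have -> : ((9 * a + 3 * b + t) %/ 3 %% 3 = b)%N by lia.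
have -> : ((9 * a + 3 * b + t) %% 3 = t)%N by lia.
by [].
Qed.

Lemma evalv_ptK a b t : evalv (ptK a b t) =
  if t == 0%N then (1, eC a, rC C * eC b)
  else if t == 1%N then (rC C * eC b, 1, eC a) else (eC a, rC C * eC b, 1).
Proof.
by rewrite /ptK /evalv; case: ifP => _; [|case: ifP => _] => /=; rewrite ?eval_K1 ?eval_mul ?eval_Kr.
Qed.

Lemma cube1 (t : C) : t ^+ 3 = 1 -> exists2 a, (a < 3)%N & t = eC a.
Proof.
move/(cuberoot1 (wC_eq C)) => [] ->.
- by exists 0%N => //; rewrite eC0.
- by exists 1%N => //; rewrite eC1.
- by exists 2%N => //; rewrite eC2.
Qed.

Lemma rC_neq0 : rC C != 0.
Proof.
apply/eqP => h; have := rC_eq C; rewrite h expr0n /= add0r => /eqP.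
by rewrite pnatr_eq0.
Qed.

Lemma helper (u v t : C) : u ^+ 3 = v ^+ 3 -> t ^+ 3 + u ^+ 3 + v ^+ 3 = 0 ->
  [\/ u != 0, v != 0 | t != 0] ->
  u != 0 /\ exists a b, [/\ (a < 3)%N, (b < 3)%N, v = u * eC a & t = u * (rC C * eC b)].
Proof.
move=> huv hf hnz.
have hu : u != 0.
  apply/negP => /eqP u0; move: huv hf hnz; rewrite u0 expr0n /= => /esym /eqP.
  rewrite expf_eq0 /= => /eqP ->; rewrite expr0n /= !addr0 => /eqP.
  by rewrite expf_eq0 /= => /eqP ->; rewrite eqxx; case.
split => //.
have hu3 : u ^+ 3 != 0 by rewrite expf_neq0.
have [a ha ea] : exists2 a, (a < 3)%N & v / u = eC a.
  by apply: cube1; rewrite expr_div_n -huv divff.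
have hr := rC_neq0.
have [b hb eb] : exists2 b, (b < 3)%N & t / (u * rC C) = eC b.
  apply: cube1; rewrite expr_div_n exprMn.
  have -> : t ^+ 3 = u ^+ 3 * (rC C) ^+ 3.
    have e := rC_eq C.
    have -> : rC C ^+ 3 = -2 by apply/eqP; rewrite -subr_eq0 opprK e.
    by apply/eqP; rewrite -subr_eq0; rewrite -hf huv; apply/eqP; ring.
  by rewrite divff // mulf_neq0 // expf_neq0.
exists a, b; split => //.
- by rewrite -ea mulrCA divff // mulr1.
- by rewrite -eb mulrA mulrCA divff ?mulr1 // mulf_neq0.
Qed.

Lemma sext_class p : sextactic p -> exists2 i, (i < 27)%N & proj_eq p (evalv (ptI i)).
Proof.
case: p => [[x y z]] [/nonzero3E /= hnz [hf hs]].
rewrite /on_fermat in hf.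
move/eqP: hs; rewrite !mulf_eq0 !subr_eq0 => /orP[/orP[]|] /eqP h.
- have hf' : z ^+ 3 + x ^+ 3 + y ^+ 3 = 0 by rewrite -hf; ring.
  have [hx [a [b [ha hb -> ->]]]] := @helper x y z h hf' hnz.
  exists (9 * a + 3 * b + 0)%N; first by lia.
  rewrite ptI_idx // evalv_ptK /=.
  by exists x; split => //; rewrite !mulr1.
- have hnz' : [\/ y != 0, z != 0 | x != 0].
    by case: hnz => ?; [constructor 3|constructor 1|constructor 2].
  have hf' : x ^+ 3 + y ^+ 3 + z ^+ 3 = 0 by rewrite -hf.
  have [hx [a [b [ha hb -> ->]]]] := @helper y z x h hf' hnz'.
  exists (9 * a + 3 * b + 1)%N; first by lia.
  rewrite ptI_idx // evalv_ptK /=.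
  by exists y; split => //; rewrite !mulr1.
- have hnz' : [\/ z != 0, x != 0 | y != 0].
    by case: hnz => ?; [constructor 2|constructor 3|constructor 1].
  have hf' : y ^+ 3 + z ^+ 3 + x ^+ 3 = 0 by rewrite -hf; ring.
  have [hx [a [b [ha hb -> ->]]]] := @helper z x y h hf' hnz'.
  exists (9 * a + 3 * b + 2)%N; first by lia.
  rewrite ptI_idx // evalv_ptK /=.
  by exists z; split => //; rewrite !mulr1.
Qed.

End Geo2.

End M_Geo2.
Import M_Geo2.

Module M_Geo3.
Local Open Scope ring_scope.

Lemma check_pts_true : check_pts = true. Proof. by vm_compute. Qed.
Lemma check_lines_true : check_lines = true. Proof. by vm_compute. Qed.
Lemma check_triples_true : check_triples = true. Proof. by vm_compute. Qed.

Section Geo3.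
Variable C : numClosedFieldType.
Notation V := (vec3 C).
Notation evalv := (@evalv C).

Lemma in_iota_lt i n : (i < n)%N -> i \in iota 0 n.
Proof. by rewrite mem_iota. Qed.

Lemma pt_facts i : (i < 27)%N ->
  [/\ ~~ isK0v (ptI i), isK0 (fermK (ptI i)), isK0 (sextK (ptI i)) &
    (forall j, (j < 27)%N -> i <> j -> ~~ isK0v (crossK (ptI i) (ptI j)))].
Proof.
move=> hi; have := check_pts_true; rewrite /check_pts => /allP /(_ i (in_iota_lt hi)).
case/and4P => h1 h2 h3 /allP h4; split => // j hj hij.
by have := h4 j (in_iota_lt hj); case: eqP.
Qed.

Lemma pt_sext i : (i < 27)%N -> sextactic (evalv (ptI i)).
Proof.
move=> /pt_facts [h1 h2 h3 _]; split; first exact: evalv_nz.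
move: (isK0_eval C h2) (isK0_eval C h3).
rewrite /fermK /sextK /on_fermat /evalv /=.
rewrite !eval_add !eval_mul !eval_sub !eval_cube => -> ->.
by split.
Qed.

Lemma pt_distinct i j : (i < 27)%N -> (j < 27)%N -> i <> j ->
  ~ proj_eq (evalv (ptI i)) (evalv (ptI j)).
Proof.
move=> hi hj hij /proj_cross; rewrite -evalv_cross => /evalv_zero.
by have [_ _ _ /(_ j hj hij) /negP] := pt_facts hi.
Qed.

Lemma line_facts m : (m < 81)%N ->
  [/\ ~~ isK0v (LsI m),
      (forall m', (m' < 81)%N -> m <> m' -> ~~ isK0v (crossK (LsI m) (LsI m'))) &
      (exists i j k, [/\ [&& (i < j)%N, (j < k)%N & (k < 27)%N], isK0 (dotK (LsI m) (ptI i)),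
            isK0 (dotK (LsI m) (ptI j)) & isK0 (dotK (LsI m) (ptI k))])].
Proof.
move=> hm; have := check_lines_true; rewrite /check_lines => /allP /(_ m (in_iota_lt hm)).
case/and3P => h1 /allP h2 h3; split => //.
  by move=> m' hm' hmm'; have := h2 m' (in_iota_lt hm'); case: eqP.
move: h3; case: (nth _ wits m) => [[i j] k] /and3P [h4 h5 /and4P [h6 h7 h8 h9]].
by exists i, j, k; split => //; apply/and3P.
Qed.

Lemma line_nz m : (m < 81)%N -> nonzero3 (evalv (LsI m)).
Proof. by case/line_facts => h _ _; apply: evalv_nz. Qed.

Lemma line_distinct m m' : (m < 81)%N -> (m' < 81)%N -> m <> m' ->
  ~ proj_eq (evalv (LsI m)) (evalv (LsI m')).
Proof.
move=> hm hm' hmm /proj_cross; rewrite -evalv_cross => /evalv_zero.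
by case/line_facts: hm => _ /(_ m' hm' hmm) /negP.
Qed.

Lemma line_sext m : (m < 81)%N -> sextactic_line (evalv (LsI m)).
Proof.
move=> hm; have [h1 _ [i [j [k [/and3P[hij hjk hk] di dj dk]]]]] := line_facts hm.
split; first exact: evalv_nz.
exists (evalv (ptI i)), (evalv (ptI j)), (evalv (ptI k)).
have hj : (j < 27)%N by lia.
have hi : (i < 27)%N by lia.
split; first by split; apply: pt_sext.
split; first by split; apply: pt_distinct => //; lia.
by split; rewrite /on_line -/(dot _ _) -evalv_dot; apply: isK0_eval.
Qed.

Lemma triple_fact i j k : (i < 27)%N -> (j < 27)%N -> (k < 27)%N ->
  i <> j -> k <> i -> k <> j -> isK0 (dotK (ptI k) (crossK (ptI i) (ptI j))) ->
  exists2 m, (m < 81)%N & isK0v (crossK (crossK (ptI i) (ptI j)) (LsI m)).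
Proof.
move=> hi hj hk hij hki hkj hd.
have := check_triples_true; rewrite /check_triples => /allP /(_ i (in_iota_lt hi)).
move=> /allP /(_ j (in_iota_lt hj)); case: eqP => // _.
move=> /allP /(_ k (in_iota_lt hk)); case: eqP => // _; case: eqP => // _ /=.
rewrite /tripleOK hd => /hasP [m]; rewrite mem_iota add0n => /andP[_ hm] h.
by exists m.
Qed.

Lemma line_class l : sextactic_line l -> exists2 m, (m < 81)%N & proj_eq l (evalv (LsI m)).
Proof.
case=> hl [p1 [p2 [p3 [[s1 s2 s3] [[d12 d13 d23] [o1 o2 o3]]]]]].
have [i hi e1] := sext_class s1.
have [j hj e2] := sext_class s2.
have [k hk e3] := sext_class s3.
have o1' := proj_on_line e1 o1.
have o2' := proj_on_line e2 o2.
have o3' := proj_on_line e3 o3.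
have hij : i <> j.
  by move=> h; apply: d12; apply: proj_trans e1 _; rewrite h; apply: proj_sym.
have hki : k <> i.
  by move=> h; apply: d13; apply: proj_trans e1 _; rewrite -h; apply: proj_sym.
have hkj : k <> j.
  by move=> h; apply: d23; apply: proj_trans e2 _; rewrite -h; apply: proj_sym.
have hdet := det_zero hl o1' o2' o3'.
have hd : isK0 (dotK (ptI k) (crossK (ptI i) (ptI j))).
  by apply: (@eval_isK0 C); rewrite evalv_dot evalv_cross.
have [m hm hc] := triple_fact hi hj hk hij hki hkj hd.
exists m => //.
have hcnz : nonzero3 (evalv (crossK (ptI i) (ptI j))).
  by apply: evalv_nz; have [_ _ _ /(_ j hj hij)] := pt_facts hi.
apply: proj_trans (_ : proj_eq _ (evalv (crossK (ptI i) (ptI j)))) _.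
  apply: cross_proj => //; rewrite evalv_cross; exact: cross_dot.
apply: cross_proj => //; first exact: line_nz.
by rewrite -evalv_cross; apply: isK0v_evalv.
Qed.

End Geo3.

End M_Geo3.
Import M_Geo3.

Module M_Grp.
Local Open Scope ring_scope.

Section Grp.
Variable C : numClosedFieldType.
Notation MP := {mpoly C[3]}.
Notation evalv := (@evalv C).
Notation eC := (@eC C).
Notation ev := (eval C).

Definition Xv (t : nat) : MP := if t == 0%N then X0 C else if t == 1%N then X1 C else X2 C.

Lemma wMP : (wC C)%:MP ^+ 2 + (wC C)%:MP + 1 = 0 :> MP.
Proof. by rewrite -rmorphXn -rmorphD -(rmorph1 (mpolyC 3 (R := C))) -rmorphD wC_eq rmorph0. Qed.

Lemma eCMP0 : (eC 0)%:MP = 1 :> MP. Proof. by rewrite eC0 rmorph1. Qed.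
Lemma eCMP1 : (eC 1)%:MP = (wC C)%:MP :> MP. Proof. by rewrite eC1. Qed.
Lemma eCMP2 : (eC 2)%:MP = - 1 - (wC C)%:MP :> MP.
Proof. by rewrite eC2 rmorphB rmorphN rmorph1. Qed.

Lemma lf_axl t s c j : (t < 3)%N -> (s < 3)%N -> t <> s ->
  linform (evalv (axl t s c j)) = Xv t + (eC j)%:MP * ((ev c)%:MP * Xv s).
Proof.
move=> ht hs hts.
rewrite mulrA -rmorphM mul_mpolyC.
rewrite /axl /setv /evalv /linform /Xv /X0 /X1 /X2.
case: t ht hts => [|[|[|//]]] _; case: s hs => [|[|[|//]]] _ // _ /=;
 rewrite ?eval_K1 ?eval_K0 ?eval_mul ?scale1r ?scale0r ?addr0 ?add0r /eC mulrC //; ring.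
Qed.

Lemma monoM_unit t : (t < 3)%N -> monoM C (unitm t) = Xv t ^+ 3.
Proof.
by case: t => [|[|[|//]]] _; rewrite /monoM /unitm /Xv /= ?expr0 ?expr1 ?mul1r ?mulr1.
Qed.

Lemma axis_group_gen t s c : (t < 3)%N -> (s < 3)%N -> t <> s ->
  linform (evalv (axl t s c 0)) * (linform (evalv (axl t s c 1)) *
    (linform (evalv (axl t s c 2)) * 1)) =
  evalP C [:: (unitm t, K1); (unitm s, cubeK c)].
Proof.
move=> ht hs hts.
rewrite !lf_axl // mulr1 eCMP0 eCMP1 eCMP2 (L3shape _ _ wMP).
rewrite !evalP_cons evalP_nil /term /= !monoM_unit // eval_K1 rmorph1 eval_cube rmorphXn /=.
ring.
Qed.

Lemma LsI_axis g j : (g < 9)%N -> (j < 3)%N -> LsI (3 * g + j) = axlg g j.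
Proof.
move=> hg hj; rewrite /LsI.
have -> : (3 * g + j < 27)%N by lia.
have -> : ((3 * g + j) %/ 3 = g)%N by lia.
have -> : ((3 * g + j) %% 3 = j)%N by lia.
by [].
Qed.

Lemma axis_group g : (g < 9)%N ->
  \prod_(m <- iota (0 + 3 * g) 3) linform (evalv (LsI m)) = evalP C (axisP g).
Proof.
move=> hg.
have -> : iota (0 + 3 * g) 3 = [:: 3 * g + 0; 3 * g + 1; 3 * g + 2]%N.
  by rewrite /= add0n addn0 addn1 addn2.
rewrite !big_cons big_nil !LsI_axis // /axlg /axisP.
apply: axis_group_gen.
- by case: g hg => [|[|[|[|[|[|[|[|[|//]]]]]]]]].
- by case: g hg => [|[|[|[|[|[|[|[|[|//]]]]]]]]].
- by case: g hg => [|[|[|[|[|[|[|[|[|//]]]]]]]]].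
Qed.


Lemma LsI_orb o i j : (o < 6)%N -> (i < 3)%N -> (j < 3)%N ->
  LsI (27 + 9 * o + 3 * i + j) = xyzl o i j.
Proof.
move=> ho hi hj; rewrite /LsI.
have -> : (27 + 9 * o + 3 * i + j < 27)%N = false by lia.
have -> : ((27 + 9 * o + 3 * i + j - 27) %/ 9 = o)%N by lia.
have -> : ((27 + 9 * o + 3 * i + j - 27) %/ 3 %% 3 = i)%N by lia.
have -> : ((27 + 9 * o + 3 * i + j - 27) %% 3 = j)%N by lia.
by [].
Qed.

Lemma lf_xyz o i j : linform (evalv (xyzl o i j)) =
  (eC i)%:MP * ((ev (nth K0 orbA o))%:MP * X0 C) +
  (eC j)%:MP * ((ev (nth K0 orbB o))%:MP * X1 C) + (ev (nth K0 orbC o))%:MP * X2 C.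
Proof.
rewrite /xyzl /evalv /linform /= !eval_mul !mulrA -!rmorphM !mul_mpolyC.
by rewrite /eC [eC _ * _]mulrC [ev (Ke j) * _]mulrC.
Qed.

Lemma big3 (F : nat -> MP) a : \prod_(m <- iota a 3) F m = F (a + 0)%N * (F (a + 1)%N * (F (a + 2)%N * 1)).
Proof. by rewrite /= !big_cons big_nil addn0 addn1 addn2. Qed.

Lemma LsI_orb' o i j n : (o < 6)%N -> (i < 3)%N -> (j < 3)%N ->
  n = (27 + 9 * o + 3 * i + j)%N -> LsI n = xyzl o i j.
Proof. by move=> ho hi hj ->; apply: LsI_orb. Qed.

Lemma evalP_orbP o : evalP C (orbP o) =
  (evalP C (linP o)) ^+ 3 + term C ((1,1,1)%N, mulK (Kz (-27)) (mulK (cubeK (nth K0 orbA o))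
        (mulK (cubeK (nth K0 orbB o)) (cubeK (nth K0 orbC o))))).
Proof.
have h1 : forall t, evalP C [:: t] = term C t.
  by move=> t; rewrite evalP_cons evalP_nil addr0.
rewrite /orbP evalP_cat h1 evalP_norm !evalP_mul; ring.
Qed.

Lemma big_cat3 (F : nat -> MP) l1 l2 l3 : \prod_(m <- l1 ++ (l2 ++ l3)) F m =
  (\prod_(m <- l1) F m) * ((\prod_(m <- l2) F m) * (\prod_(m <- l3) F m)).
Proof. by rewrite !big_cat. Qed.

Lemma orb_group o : (o < 6)%N ->
  \prod_(m <- iota (27 + 9 * o) 9) linform (evalv (LsI m)) = evalP C (orbP o).
Proof.
move=> ho.
have -> : iota (27 + 9 * o) 9 = iota (27 + 9 * o) 3 ++ (iota (27 + 9 * o + 3) 3 ++ iota (27 + 9 * o + 3 + 3) 3).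
  by rewrite -!iotaD.
rewrite big_cat3 !big3.
rewrite (@LsI_orb' o 0 0 _ ho isT isT); last by lia.
rewrite (@LsI_orb' o 0 1 _ ho isT isT); last by lia.
rewrite (@LsI_orb' o 0 2 _ ho isT isT); last by lia.
rewrite (@LsI_orb' o 1 0 _ ho isT isT); last by lia.
rewrite (@LsI_orb' o 1 1 _ ho isT isT); last by lia.
rewrite (@LsI_orb' o 1 2 _ ho isT isT); last by lia.
rewrite (@LsI_orb' o 2 0 _ ho isT isT); last by lia.
rewrite (@LsI_orb' o 2 1 _ ho isT isT); last by lia.
rewrite (@LsI_orb' o 2 2 _ ho isT isT); last by lia.
rewrite !mulr1 !lf_xyz eCMP0 eCMP1 eCMP2 (L9shape _ _ _ wMP).
rewrite evalP_orbP /linP !evalP_cons evalP_nil /term; cbn [fst snd].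
rewrite !eval_cube !eval_mul ?eval_cube eval_Kz /monoM; cbn [fst snd].
rewrite !expr0 !expr1 !mulr1 addr0.
have -> : zC C (-27) = - 27%:R by rewrite /zC /=.
rewrite !rmorphM rmorphN rmorph_nat.
ring.
Qed.

End Grp.

End M_Grp.
Import M_Grp.

Module M_Fin.
Local Open Scope ring_scope.

Section Fin.
Variable C : numClosedFieldType.
Notation MP := {mpoly C[3]}.
Notation V := (vec3 C).
Notation evalv := (@evalv C).

Lemma big_chunk (F : nat -> MP) a c n :
  \prod_(m <- iota a (c * n)) F m = \prod_(g <- iota 0 n) \prod_(m <- iota (a + c * g) c) F m.
Proof.
elim: n => [|n IH]; first by rewrite muln0 !big_nil.
have -> : iota 0 n.+1 = iota 0 n ++ [:: n] by rewrite -addn1 iotaD.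
by rewrite mulnSr iotaD big_cat IH big_cat big_seq1.
Qed.

Lemma prod81 : \prod_(m <- iota 0 81) linform (evalv (LsI m)) = evalP C bigP.
Proof.
rewrite (iotaD 0 27 54) big_cat evalP_bigP /groups big_cat !big_map add0n.
congr (_ * _).
  rewrite (big_chunk _ 0 3 9); apply: eq_big_seq => g; rewrite mem_iota add0n => /andP[_ hg].
  exact: axis_group.
rewrite (big_chunk _ 27 9 6); apply: eq_big_seq => o; rewrite mem_iota add0n => /andP[_ ho].
exact: orb_group.
Qed.

Lemma linform_scale k (a b c : C) : linform (k * a, k * b, k * c) = k *: linform (a, b, c).
Proof. by rewrite /linform /= !scalerDr !scalerA. Qed.

Lemma prod_scale (s : seq V) (g : V -> V) : (forall l, l \in s -> proj_eq l (g l)) ->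
  exists2 K : C, K != 0 & \prod_(l <- s) linform l = K *: \prod_(l <- s) linform (g l).
Proof.
elim: s => [|l s IH] H; first by exists 1; rewrite ?oner_eq0 // !big_nil scale1r.
have [K hK e] : exists2 K : C, K != 0 & \prod_(l <- s) linform l = K *: \prod_(l <- s) linform (g l).
  by apply: IH => l' hl'; apply: H; rewrite in_cons hl' orbT.
have [k [hk el]] := H l (mem_head _ _).
exists (k * K); first by rewrite mulf_neq0.
rewrite !big_cons e; move: el; case: (g l) => [[a b] c] /= ->; rewrite linform_scale.
by rewrite -scalerAr -scalerAl scalerA [K * k]mulrC.
Qed.

Definition fidx (l : V) : nat := find (fun m => cross l (evalv (LsI m)) == (0, 0, 0)) (iota 0 81).

Lemma fidx_spec l : sextactic_line l -> (fidx l < 81)%N /\ proj_eq l (evalv (LsI (fidx l))).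
Proof.
move=> hl; have [m hm e] := line_class hl.
have hh : has (fun m => cross l (evalv (LsI m)) == (0, 0, 0)) (iota 0 81).
  by apply/hasP; exists m; [rewrite mem_iota|apply/eqP; apply: proj_cross].
have hlt : (fidx l < 81)%N by have := hh; rewrite has_find size_iota.
split => //.
have := nth_find 0%N hh; rewrite -/(fidx l) nth_iota // add0n => /eqP hc.
apply: cross_proj => //; [exact: hl.1|exact: line_nz].
Qed.

End Fin.


End M_Fin.
Import M_Fin.

Local Open Scope ring_scope.

Theorem mainTheorem9 (C : numClosedFieldType) (s : seq (vec3 C)) :
  (forall l, l \in s -> sextactic_line l) ->
  (forall l, sextactic_line l -> exists2 l', l' \in s & proj_eq l l') ->
  (forall i j, (i < size s)%N -> (j < size s)%N -> i <> j ->
     ~ proj_eq (nth (0, 0, 0) s i) (nth (0, 0, 0) s j)) ->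
  exists c : C, c != 0 /\ int_mpoly (c *: \prod_(l <- s) linform l).
Proof.
move=> H1 H2 H3.
have : forall l, l \in s -> (fidx l < 81)%N /\ proj_eq l (evalv C (LsI (fidx l))).
  by move=> l /H1; apply: fidx_spec.
move: (@fidx C) => f Hf.
have [K hK eK] := prod_scale (fun l hl => (Hf l hl).2).
have hu : uniq (map f s).
  apply/(uniqP 0%N) => i j; rewrite !inE size_map => hi hj.
  rewrite !(nth_map (0, 0, 0)) // => e.
  case: (eqVneq i j) => // /eqP hij; exfalso; apply: (H3 i j hi hj hij).
  have [_ pi] := Hf _ (mem_nth (0,0,0) hi).
  have [_ pj] := Hf _ (mem_nth (0,0,0) hj).
  by rewrite e in pi; apply: proj_trans pi (proj_sym pj).
have hp : perm_eq (map f s) (iota 0 81).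
  apply: uniq_perm; [exact: hu|exact: iota_uniq|].
  move=> m; rewrite mem_iota add0n; apply/idP/idP.
    by case/mapP => l hl ->; have [] := Hf l hl.
  move=> hm; have [l' hl' e] := H2 _ (line_sext C hm).
  have [hl'1 hl'2] := Hf l' hl'.
  have em : m = f l'.
    case: (eqVneq m (f l')) => // /eqP ne; exfalso.
    by apply: (line_distinct hm hl'1 ne); apply: proj_trans e hl'2.
  by rewrite em; apply: map_f.
have eP : \prod_(l <- s) linform (evalv C (LsI (f l))) = \prod_(m <- iota 0 81) linform (evalv C (LsI m)).
  by rewrite -(perm_big _ hp) big_map.
rewrite eP prod81 evalP_bigP_ratio scalerA in eK.
set c1 := K * (eval C c0K / zC C Dz) in eK.
have hc1 : c1 != 0.
  by rewrite /c1 mulf_neq0 // mulf_neq0 ?invr_eq0 ?zCDz_neq0 ?c0K_neq0.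
exists c1^-1; split; first by rewrite invr_eq0.
rewrite eK scalerA mulVf // scale1r.
exact: intP_Qint.
Qed.
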